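(* Let $f:\mathbb{R}_+\to\mathbb{R}$ be completely monotone to order four. Then for every nonnegative real random variable $W$, \[ \operatorname{Cov}(W,f'(W))=\mathbb{E}\big[(W-\mathbb{E}W)f'(W)\big]\le\mathbb{E}[W^2]\cdot\mathbb{E}[f''(W)], \] whenever the expectations are finite.
   Context: A function $f:I\to\mathbb{R}$ on an interval $I\subseteq\mathbb{R}$ is completely monotone to order $K$ if its first $K$ derivatives exist and $(-1)^kf^{(k)}(w)\ge0$ for all $w\in I$ and each $k=0,1,\dots,K$; at an endpoint of $I$ contained in $I$, derivatives are one-sided. Here $\mathbb{R}_+=[0,\infty)$. *)

(* Defs.v *)
From HB Require Import structures.
From mathcomp Require Import all_boot all_order all_algebra.
From mathcomp Require Import all_classical all_reals all_analysis.
Set Implicit Arguments. Unset Strict Implicit. Unset Printing Implicit Defensive.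
Import Order.TTheory GRing.Theory Num.Theory.
Import numFieldNormedType.Exports.
Local Open Scope classical_set_scope.
Local Open Scope ring_scope.

(* [deriv_on_Rplus g g'] : on R_+ = [0, +oo), the function g is differentiable
   with derivative g', derivatives at the endpoint 0 being one-sided (right):
   for every w >= 0, (g (w + h) - g w) / h --> g' w as h --> 0 with h <> 0
   and w + h in R_+. *)
Definition deriv_on_Rplus (R : realType) (g g' : R -> R) : Prop :=
  forall w : R, 0 <= w ->
    (fun h : R => h^-1 * (g (w + h) - g w))
      @ within [set h : R | h != 0 /\ 0 <= w + h] (nbhs (0 : R)) --> g' w.

Definition completely_monotone4 (R : realType) (f f1 f2 f3 f4 : R -> R) : Prop :=
  [/\ deriv_on_Rplus f f1, deriv_on_Rplus f1 f2, deriv_on_Rplus f2 f3,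
      deriv_on_Rplus f3 f4 &
      forall w : R, 0 <= w ->
        [/\ 0 <= f w, f1 w <= 0, 0 <= f2 w, f3 w <= 0 & 0 <= f4 w]].

(* Main.v *)
Require Import Defs.
From HB Require Import structures.
From mathcomp Require Import all_boot all_order all_algebra.
From mathcomp Require Import all_classical all_reals all_analysis.
From mathcomp Require Import ring lra.
Import Order.TTheory GRing.Theory Num.Theory.
Import numFieldNormedType.Exports.
Local Open Scope classical_set_scope.
Local Open Scope ring_scope.

Section S.
Variable R : realType.

Lemma deps (g g' : R -> R) w : deriv_on_Rplus g g' -> 0 <= w ->
  forall e : R, 0 < e -> exists2 d : R, 0 < d &
    forall h : R, h != 0 -> 0 <= w + h -> `|h| < d ->
      `|h^-1 * (g (w + h) - g w) - g' w| < e.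
Proof.
move=> /(_ w) H w0 e e0.
move/cvgrPdist_lt/(_ _ e0): (H w0); rewrite near_withinE.
case=> d /= d0 Hd; exists d => // h h0 wh hd.
rewrite distrC; apply: (Hd h) => //.
by rewrite /= sub0r normrN.
Qed.
Lemma dcont (g g' : R -> R) (x : R) : deriv_on_Rplus g g' -> 0 <= x ->
  g @ within [set y | 0 <= y] (nbhs x) --> g x.
Proof.
move=> H x0; apply/cvgrPdist_lt => e e0; rewrite near_withinE.
have [d1 d10 Hd1] := @deps g g' x H x0 1 ltr01.
set M := `|g' x| + 1.
have M0 : 0 < M by rewrite /M ltr_wpDl.
exists (Num.min d1 (e / M)); first by rewrite /= lt_min d10 divr_gt0.
move=> y /= Hy y0.
have [->|yx] := eqVneq y x; first by rewrite subrr normr0.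
have h0 : y - x != 0 by rewrite subr_eq0.
have := Hd1 (y - x) h0; rewrite addrC subrK => /(_ y0).
have hd : `|y - x| < Num.min d1 (e / M) by rewrite distrC.
move: hd; rewrite lt_min => /andP[hd1 hde] /(_ hd1) Hq.
have qM : `|(y - x)^-1 * (g y - g x)| <= M.
  have := ler_normD ((y - x)^-1 * (g y - g x) - g' x) (g' x).
  rewrite subrK => /le_trans; apply; rewrite /M addrC lerD2l ltW //.
have -> : g x - g y = - ((y - x) * ((y - x)^-1 * (g y - g x))).
  by rewrite mulrA mulfV // mul1r opprB.
rewrite normrN normrM.
have hM : `|y - x| * M < e by rewrite -ltr_pdivlMr.
apply: le_lt_trans hM; apply: ler_wpM2l => //.
Qed.
Lemma dderiv (g g' : R -> R) (x : R) : deriv_on_Rplus g g' -> 0 < x ->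
  is_derive x 1 g (g' x).
Proof.
move=> H x0.
have Q : (fun h : R => h^-1 *: ((g \o shift x) (h *: 1) - g x)) @ 0^' --> g' x.
  apply/cvgrPdist_lt => e e0; rewrite /dnbhs near_withinE.
  have [d d0 Hd] := @deps g g' x H (ltW x0) e e0.
  exists (Num.min d x); first by rewrite /= lt_min d0 x0.
  move=> h /=; rewrite sub0r normrN lt_min => /andP[hd hx] h0.
  rewrite distrC /shift /=.
  have -> : h^-1 *: (g (h%:A + x) - g x) = h^-1 * (g (x + h) - g x)  by rewrite [h%:A]mulr1 (addrC h x).
  apply: Hd => //.
  have := ler_norm (- h); rewrite normrN => Hh.
  rewrite -(opprK h) subr_ge0; exact: (le_trans Hh (ltW hx)).
apply: DeriveDef; first exact: cvgP Q.
rewrite /derive; exact: cvg_lim Q.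
Qed.

Lemma dmvt (g g' : R -> R) (a b : R) : deriv_on_Rplus g g' -> 0 <= a -> a < b ->
  exists2 c, a < c < b & g b - g a = g' c * (b - a).
Proof.
move=> H a0 ab.
have [c c1 c2] : exists2 c, c \in `]a, b[ & g b - g a = g' c * (b - a).
  apply: MVT => //.
    move=> x; rewrite in_itv /= => /andP[ax _]; apply: dderiv => //.
    exact: le_lt_trans ax.
  apply: (@continuous_subspaceW _ _ _ [set y : R | 0 <= y]); last first.
  apply/subspace_continuousP => y y0; exact: dcont H y0.
  by move=> y; rewrite /= in_itv /= => /andP[ay _]; exact: le_trans ay.
by exists c => //; move: c1; rewrite in_itv.
Qed.
Arguments dmvt [g g' a b].
Lemma mono_ge0 (g g' : R -> R) (a b : R) : deriv_on_Rplus g g' ->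
  (forall x, 0 <= x -> 0 <= g' x) -> 0 <= a -> a <= b -> g a <= g b.
Proof.
move=> H Hp a0; rewrite le_eqVlt => /predU1P[->//|ab].
have [c /andP[ac cb] E] := dmvt H a0 ab.
rewrite -subr_ge0 E mulr_ge0 //; first by apply: Hp; exact: le_trans (ltW ac).
by rewrite subr_ge0 ltW.
Qed.

Lemma mono_le0 (g g' : R -> R) (a b : R) : deriv_on_Rplus g g' ->
  (forall x, 0 <= x -> g' x <= 0) -> 0 <= a -> a <= b -> g b <= g a.
Proof.
move=> H Hp a0; rewrite le_eqVlt => /predU1P[->//|ab].
have [c /andP[ac cb] E] := dmvt H a0 ab.
rewrite -subr_le0 E mulr_le0_ge0 //; first by apply: Hp; exact: le_trans (ltW ac).
by rewrite subr_ge0 ltW.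
Qed.

Lemma tangent_cvx (g g' : R -> R) (x y : R) : deriv_on_Rplus g g' ->
  (forall a b, 0 <= a -> a <= b -> g' a <= g' b) -> 0 <= x -> 0 <= y ->
  g x + g' x * (y - x) <= g y.
Proof.
move=> H Hm x0 y0.
have [xy|yx|<-] := ltgtP x y.
- have [c /andP[xc cy] E] := dmvt H x0 xy.
  have : g' x <= g' c by apply: Hm => //; exact: ltW.
  have : 0 < y - x by rewrite subr_gt0.
  nra.
- have [c /andP[yc cx] E] := dmvt H y0 yx.
  have : g' c <= g' x by apply: Hm => //; [exact: le_trans (ltW yc) | exact: ltW].
  have : 0 < x - y by rewrite subr_gt0.
  nra.
- by rewrite subrr mulr0 addr0.
Qed.

Lemma tangent_ccv (g g' : R -> R) (x y : R) : deriv_on_Rplus g g' ->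
  (forall a b, 0 <= a -> a <= b -> g' b <= g' a) -> 0 <= x -> x <= y ->
  g y <= g x + g' x * (y - x).
Proof.
move=> H Hm x0; rewrite le_eqVlt => /predU1P[<-|xy].
  by rewrite subrr mulr0 addr0.
have [c /andP[xc cy] E] := dmvt H x0 xy.
have : g' c <= g' x by apply: Hm => //; exact: ltW.
have : 0 < y - x by rewrite subr_gt0.
nra.
Qed.
Lemma pt (f f1 f2 f3 f4 : R -> R) (w m : R) :
  completely_monotone4 f f1 f2 f3 f4 -> 0 <= w -> 0 <= m ->
  (w - m) * f1 w <= f2 m * (w - m) ^+ 2 + m ^+ 2 * f2 w + f1 m * (w - m) /\
  f2 m + f3 m * (w - m) <= f2 w.
Proof.
case=> _ D2 D3 D4 sg w0 m0.
have f2dec a b : 0 <= a -> a <= b -> f2 b <= f2 a.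
  move=> a0 ab; apply: (mono_le0 _ _ _ _ D3) => // x x0.
  by have [] := sg x x0.
have f3inc a b : 0 <= a -> a <= b -> f3 a <= f3 b.
  move=> a0 ab; apply: (mono_ge0 _ _ _ _ D4) => // x x0.
  by have [] := sg x x0.
split; last exact: (tangent_cvx _ _ _ _ D3 f3inc m0 w0).
have [_ _ f2w _ _] := sg w w0.
have [_ _ f2m _ _] := sg m m0.
case: (leP m w) => mw.
- have T1 := tangent_ccv _ _ _ _ D2 f2dec m0 mw.
  have wm : 0 <= w - m by rewrite subr_ge0.
  have := ler_wpM2l wm T1.
  have : 0 <= m ^+ 2 * f2 w by rewrite mulr_ge0 // sqr_ge0.
  nra.
- have T1 := tangent_ccv _ _ _ _ D2 f2dec w0 (ltW mw).
  have mw' : 0 <= m - w by rewrite subr_ge0 ltW.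
  have := ler_wpM2l mw' T1.
  have : (m - w) ^+ 2 <= m ^+ 2.
    have : 0 <= w * (m + (m - w)) by rewrite mulr_ge0 // addr_ge0.
    nra.
  move=> H2; have := ler_wpM2l f2w H2.
  have : 0 <= f2 m * (w - m) ^+ 2 by rewrite mulr_ge0 // sqr_ge0.
  nra.
Qed.
End S.

Section M.
Context {d : measure_display} {T : measurableType d} {R : realType} {P : probability T R}.
Local Notation int u := (P.-integrable setT (EFin \o u)).
Definition II (u : T -> R) : R := fine (\int[P]_t (u t)%:E).

Lemma intE u : int u -> (\int[P]_t (u t)%:E = (II u)%:E)%E.
Proof. by move=> iu; rewrite /II fineK //; exact: integrable_fin_num iu. Qed.

Lemma int_lin a b u v : int u -> int v -> int (fun t => a * u t + b * v t).
Proof.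
move=> iu iv.
have -> : EFin \o (fun t => a * u t + b * v t) =
  ((fun t => a%:E * (EFin \o u) t) \+ (fun t => b%:E * (EFin \o v) t))%E.
  by apply/funext => t /=; rewrite EFinD !EFinM.
by apply: integrableD => //; exact: integrableZl.
Qed.

Lemma II_lin a b u v : int u -> int v ->
  II (fun t => a * u t + b * v t) = a * II u + b * II v.
Proof.
move=> iu iv; apply: EFin_inj; rewrite -intE; last exact: int_lin.
rewrite EFinD !EFinM -!intE // -!integralZl //.
rewrite -integralD //; try exact: integrableZl.

Qed.

Lemma int_cst c : int (fun _ => c).
Proof. exact: finite_measure_integrable_cst. Qed.

Lemma II_cst c : II (fun _ => c) = c.
Proof.
rewrite /II; have := integral_cst P measurableT c%:E.
by rewrite /cst /= probability_setT mule1 => ->.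
Qed.

Lemma II_le u v : int u -> int v -> (forall t, u t <= v t) -> II u <= II v.
Proof.
move=> iu iv uv; rewrite -lee_fin -!intE //.
by apply: le_integral => // t _; rewrite lee_fin.
Qed.
End M.
Arguments II {d T R} P u.


Theorem lemma7p3 (R : realType) (f f1 f2 f3 f4 : R -> R)
  (d : measure_display) (T : measurableType d) (P : probability T R)
  (W : T -> R) :
  completely_monotone4 f f1 f2 f3 f4 ->
  (forall t, 0 <= W t) ->
  P.-integrable setT (EFin \o W) ->
  P.-integrable setT (EFin \o (fun t => f1 (W t))) ->
  P.-integrable setT (EFin \o (fun t => W t * f1 (W t))) ->
  P.-integrable setT (EFin \o (fun t => W t ^+ 2)) ->
  P.-integrable setT (EFin \o (fun t => f2 (W t))) ->
  (\int[P]_t (((W t)%:E - 'E_P[W]) * (f1 (W t))%:E)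
     <= 'E_P[fun t => (W t ^+ 2)%R] * 'E_P[fun t => f2 (W t)])%E.
Proof.
move=> cm W0 iW if1 iWf1 iW2 if2.
have i1 := @int_cst _ _ _ P 1.
set m := II P W.
set s := II P (fun t => W t ^+ 2).
set e := II P (fun t => f2 (W t)).
have m0 : 0 <= m.
  by rewrite -(@II_cst _ _ _ P 0); apply: II_le => //; exact: int_cst.
have E1 : ('E_P[W] = m%:E)%E by rewrite unlock; exact: intE.
have E2 : ('E_P[fun t => (W t ^+ 2)%R] = s%:E)%E by rewrite unlock; exact: intE.
have E3 : ('E_P[fun t => (f2 (W t))%R] = e%:E)%E by rewrite unlock; exact: intE.
rewrite E1 E2 E3.
have -> : (\int[P]_t (((W t)%:E - m%:E) * (f1 (W t))%:E) =
   \int[P]_t ((1 * (W t * f1 (W t)) + (-m) * f1 (W t))%:E))%E.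
  by apply: eq_integral => t _; rewrite -EFinB -EFinM; congr EFin; ring.
rewrite intE; last exact: int_lin.
rewrite -EFinM lee_fin.
have HL : II P (fun t => 1 * (W t * f1 (W t)) + (-m) * f1 (W t)) <=
  II P (fun t => 1 * (f2 m * W t ^+ 2 + (f1 m - 2 * m * f2 m) * W t) +
                 1 * (m ^+ 2 * f2 (W t) + (f2 m * m ^+ 2 - f1 m * m) * 1)).
  apply: II_le; try by repeat apply: int_lin.
  move=> t; have [H _] := @pt _ f f1 f2 f3 f4 (W t) m cm (W0 t) m0.
  nra.
have HV : 0 <= II P (fun t => 1 * W t ^+ 2 + 1 * ((-2 * m) * W t + m ^+ 2 * 1)).
  rewrite -(@II_cst _ _ _ P 0); apply: II_le; try by repeat apply: int_lin.
    exact: int_cst.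
  move=> t; have : 0 <= (W t - m) ^+ 2 by rewrite sqr_ge0.
  nra.
have HJ : II P (fun t => f2 m * 1 + f3 m * (1 * W t + (-m) * 1)) <= e.
  apply: II_le; try by repeat apply: int_lin.
  move=> t; have [_ H] := @pt _ f f1 f2 f3 f4 (W t) m cm (W0 t) m0.
  nra.
have f2m0 : 0 <= f2 m by case: cm => _ _ _ _ /(_ m m0) [].
rewrite !II_lin ?II_cst in HL HV HJ; try by repeat apply: int_lin.
have -> : II P (fun t => 1 * (W t * f1 (W t)) + (-m) * f1 (W t)) =
  1 * II P (fun t => W t * f1 (W t)) + (-m) * II P (fun t => f1 (W t)).
  exact: II_lin.
rewrite -/m -/s -/e in HL HV HJ.
have Hp : 0 <= (e - f2 m) * (s - m ^+ 2).
  apply: mulr_ge0; lra.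
nra.
Qed.
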